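(* Let $n\ge 1$ and $k\ge 2$ be integers and let $R\in(0,k]$. Suppose $\mathcal A$ is a (possibly randomized and adaptive) algorithm that makes $s$ queries, each a vector $\mathbf x\in\{-k,\dots,k\}^n$ answered by $\|\mathbf x-\mathbf y\|_\infty$, and that for every $\mathbf y\in\{-k,\dots,k\}^n$ outputs $\mathbf y'\in\{-k,\dots,k\}^n$ with $\|\mathbf y'-\mathbf y\|_\infty\le R$ with probability at least $2/3$ over its random coins. Then $s=\Omega\!\left(\frac{n\log(k/R)}{\log k}\right)$. In particular, if $R\le k^{1-\varepsilon}$ for a constant $\varepsilon>0$, then $s=\Omega(n)$.
   Context: $\|\mathbf z\|_\infty=\max_i|z_i|$. ''Adaptive'' means each query may depend on answers to previous queries. Constants in $\Omega(\cdot)$ may depend on $\varepsilon$. *)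

(* Defs.v *)
From Stdlib Require Export Reals ZArith List.
Open Scope R_scope.

(* A vector in Z^n is represented as a function nat -> Z; only coordinates
   0..n-1 are meaningful. *)
Definition vec := nat -> Z.

Definition in_box (n k : nat) (x : vec) : Prop :=
  forall i : nat, (i < n)%nat -> (- Z.of_nat k <= x i <= Z.of_nat k)%Z.

Fixpoint linf (n : nat) (x y : vec) : Z :=
  match n with
  | O => 0%Z
  | S m => Z.max (Z.abs (x m - y m)) (linf m x y)
  end.

(* A deterministic adaptive query algorithm: the next query is a function of
   the list of answers received so far; the output is a function of the full
   list of answers. *)
Record DetAlg := mkDetAlg {
  query  : list Z -> vec;
  output : list Z -> vec
}.

Definition valid_alg (n k : nat) (A : DetAlg) : Prop :=
  forall h : list Z, in_box n k (query A h) /\ in_box n k (output A h).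

Fixpoint history (n : nat) (A : DetAlg) (y : vec) (t : nat) : list Z :=
  match t with
  | O => nil
  | S t' => let h := history n A y t' in h ++ (linf n (query A h) y :: nil)
  end.

Definition run (n s : nat) (A : DetAlg) (y : vec) : vec :=
  output A (history n A y s).

(* A randomized algorithm = probability distribution over deterministic
   algorithms (finite support; list of (probability, algorithm)). *)
Definition RandAlg := list (R * DetAlg).

Definition is_distribution (P : RandAlg) : Prop :=
  Forall (fun p => 0 <= fst p) P /\ fold_right (fun p acc => fst p + acc) 0 P = 1.

Definition success_prob (n s : nat) (Rad : nat) (P : RandAlg) (y : vec) : R :=
  fold_right
    (fun p acc =>
       (if Z.leb (linf n (run n s (snd p) y) y) (Z.of_nat Rad) then fst p else 0)
       + acc) 0 P.

Definition good_alg (n k s Rad : nat) (P : RandAlg) : Prop :=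
  is_distribution P /\
  Forall (fun p => valid_alg n k (snd p)) P /\
  (forall y : vec, in_box n k y -> success_prob n s Rad P y >= 2/3).

(* Main.v *)
Require Import Defs.
From Stdlib Require Import Reals ZArith List Lia Lra Psatz Classical.
Open Scope R_scope.

Fixpoint sumN {A} (f : A -> nat) (L : list A) : nat :=
  match L with nil => 0%nat | a :: L' => (f a + sumN f L')%nat end.
Fixpoint sumR {A} (f : A -> R) (L : list A) : R :=
  match L with nil => 0 | a :: L' => f a + sumR f L' end.

Lemma sumN_app {A} (f : A -> nat) L1 L2 : sumN f (L1 ++ L2) = (sumN f L1 + sumN f L2)%nat.
Proof. induction L1; simpl; lia. Qed.
Lemma sumN_flat_map {A B} (f : B -> nat) (g : A -> list B) L :
  sumN f (flat_map g L) = sumN (fun a => sumN f (g a)) L.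
Proof. induction L; simpl; auto. rewrite sumN_app; lia. Qed.
Lemma sumN_map {A B} (f : B -> nat) (g : A -> B) L : sumN f (map g L) = sumN (fun a => f (g a)) L.
Proof. induction L; simpl; auto. Qed.
Lemma sumN_le {A} (f g : A -> nat) L : (forall a, In a L -> (f a <= g a)%nat) -> (sumN f L <= sumN g L)%nat.
Proof. induction L; simpl; intros H; auto. pose proof (H a (or_introl eq_refl)).
  assert (sumN f L <= sumN g L)%nat by (apply IHL; auto). lia. Qed.
Lemma sumN_In {A} (f : A -> nat) L a : In a L -> (f a <= sumN f L)%nat.
Proof. induction L; simpl; intros H; [contradiction|]. destruct H; subst; [lia|]. specialize (IHL H); lia. Qed.
Lemma sumN_swap {A B} (f : A -> B -> nat) L1 L2 :
  sumN (fun a => sumN (fun b => f a b) L2) L1 = sumN (fun b => sumN (fun a => f a b) L1) L2.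
Proof. revert L2; induction L1; intros L2; simpl.
  - induction L2; simpl; auto.
  - rewrite IHL1. clear. induction L2; simpl; auto. lia. Qed.
Lemma sumN_const_le {A} (f : A -> nat) L c : (forall a, In a L -> (f a <= c)%nat) -> (sumN f L <= c * length L)%nat.
Proof. induction L; simpl; intros H; [lia|]. pose proof (H a (or_introl eq_refl)).
  assert (sumN f L <= c * length L)%nat by (apply IHL; auto). nia. Qed.
Lemma sumN_mul_r {A} (f : A -> nat) L c : sumN (fun a => f a * c)%nat L = (sumN f L * c)%nat.
Proof. induction L; simpl; auto. rewrite IHL; lia. Qed.

Lemma sumR_ext {A} (f g : A -> R) L : (forall a, In a L -> f a = g a) -> sumR f L = sumR g L.
Proof. induction L; simpl; intros H; auto. rewrite H by auto. rewrite IHL; auto. Qed.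
Lemma sumR_le {A} (f g : A -> R) L : (forall a, In a L -> f a <= g a) -> sumR f L <= sumR g L.
Proof. induction L; simpl; intros H; [lra|]. pose proof (H a (or_introl eq_refl)).
  assert (sumR f L <= sumR g L) by (apply IHL; auto). lra. Qed.
Lemma sumR_swap {A B} (f : A -> B -> R) L1 L2 :
  sumR (fun a => sumR (fun b => f a b) L2) L1 = sumR (fun b => sumR (fun a => f a b) L1) L2.
Proof. revert L2; induction L1; intros L2; simpl.
  - induction L2 as [|b L2 IH]; simpl; [auto| rewrite <- IH; ring].
  - rewrite IHL1. clear. induction L2 as [|b L2 IH]; simpl; [ring| rewrite <- IH; ring]. Qed.
Lemma sumR_scal {A} (f : A -> R) L c : sumR (fun a => c * f a) L = c * sumR f L.
Proof. induction L; simpl. ring. rewrite IHL; ring. Qed.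
Lemma sumR_INR {A} (f : A -> nat) L : sumR (fun a => INR (f a)) L = INR (sumN f L).
Proof. induction L; simpl; auto. rewrite plus_INR, IHL; auto. Qed.
Lemma sumR_const {A} (L : list A) c : sumR (fun _ => c) L = c * INR (length L).
Proof. induction L; simpl. ring. rewrite IHL. destruct (length L); simpl; ring. Qed.
Lemma sumR_plus {A} (f g : A -> R) L : sumR (fun a => f a + g a) L = sumR f L + sumR g L.
Proof. induction L; simpl. ring. rewrite IHL; ring. Qed.

Fixpoint zr (lo : Z) (len : nat) : list Z :=
  match len with O => nil | S m => lo :: zr (lo + 1)%Z m end.
Lemma zr_In lo len z : (lo <= z < lo + Z.of_nat len)%Z -> In z (zr lo len).
Proof. revert lo; induction len; intros lo H; simpl. lia.
  destruct (Z.eq_dec lo z). left; auto. right; apply IHlen; lia. Qed.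
Lemma zr_In_inv lo len z : In z (zr lo len) -> (lo <= z < lo + Z.of_nat len)%Z.
Proof. revert lo; induction len; intros lo H; simpl in *. contradiction.
  destruct H. lia. specialize (IHlen _ H); lia. Qed.
Lemma zr_length lo len : length (zr lo len) = len.
Proof. revert lo; induction len; intros; simpl; auto. Qed.

Lemma zr_count a (Rd : Z) lo len : (0 <= Rd)%Z ->
  (Z.of_nat (sumN (fun z => if Z.leb (Z.abs (a - z)) Rd then 1%nat else 0%nat) (zr lo len))
   <= Z.max 0 (a + Rd + 1 - Z.max lo (a - Rd)))%Z.
Proof. intros HR; revert lo; induction len; intros lo; simpl. lia.
  rewrite Nat2Z.inj_add. specialize (IHlen (lo+1)%Z).
  destruct (Z.leb_spec (Z.abs (a - lo)) Rd); simpl Z.of_nat; lia. Qed.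

Definition ext (L : list (list Z)) (m : list Z) : list (list Z) :=
  flat_map (fun l => map (fun z => l ++ z :: nil) m) L.
Fixpoint grid (m : list Z) (n : nat) : list (list Z) :=
  match n with O => nil :: nil | S n' => ext (grid m n') m end.
Lemma length_ext L m : length (ext L m) = (length L * length m)%nat.
Proof. induction L; simpl; auto. unfold ext in *; simpl. rewrite length_app, length_map, IHL. lia. Qed.
Lemma grid_length m n : length (grid m n) = (length m ^ n)%nat.
Proof. induction n; simpl; auto. rewrite length_ext, IHn. lia. Qed.
Lemma grid_In m n l : In l (grid m n) -> length l = n /\ forall z, In z l -> In z m.
Proof. revert l; induction n; intros l H; simpl in *.
  - destruct H as [<-|[]]. split; auto. intros z [].
  - unfold ext in H. apply in_flat_map in H. destruct H as [l0 [H1 H2]].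
    apply in_map_iff in H2. destruct H2 as [z [<- Hz]]. destruct (IHn _ H1) as [Hl Hm].
    split. rewrite length_app; simpl; lia.
    intros z0 Hz0. apply in_app_or in Hz0. destruct Hz0 as [|[<-|[]]]; auto. Qed.
Lemma grid_In_cons m n l z : In l (grid m n) -> In z m -> In (l ++ z :: nil) (grid m (S n)).
Proof. intros. simpl. unfold ext. apply in_flat_map. exists l; split; auto. apply (in_map (fun z0 => l ++ z0 :: nil)); auto. Qed.

Definition vec_of (l : list Z) : vec := fun i => nth i l 0%Z.

Lemma linf_ext n x x' y y' : (forall i, (i < n)%nat -> x i = x' i) -> (forall i, (i < n)%nat -> y i = y' i) ->
  linf n x y = linf n x' y'.
Proof. induction n; intros; simpl; auto. rewrite H, H0, IHn by (auto; lia). auto. Qed.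
Lemma linf_ge0 n x y : (0 <= linf n x y)%Z.
Proof. induction n; simpl; lia. Qed.
Lemma linf_coord n x y i : (i < n)%nat -> (Z.abs (x i - y i) <= linf n x y)%Z.
Proof. induction n; intros H; simpl. lia. destruct (Nat.eq_dec i n). subst; lia.
  specialize (IHn ltac:(lia)); lia. Qed.
Lemma linf_bound n k x y : in_box n k x -> in_box n k y -> (linf n x y <= 2 * Z.of_nat k)%Z.
Proof. induction n; intros Hx Hy; cbn [linf]. lia.
  assert (linf n x y <= 2 * Z.of_nat k)%Z by (apply IHn; intros i Hi; [apply Hx|apply Hy]; lia).
  specialize (Hx n ltac:(lia)); specialize (Hy n ltac:(lia)). lia. Qed.

Definition boxg k n := grid (zr (- Z.of_nat k) (2 * k + 1)) n.
Definition histg k s := grid (zr 0 (2 * k + 1)) s.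

Lemma boxg_box k n l : In l (boxg k n) -> in_box n k (vec_of l).
Proof. intros H. apply grid_In in H. destruct H as [Hl Hm]. intros i Hi. unfold vec_of.
  assert (In (nth i l 0%Z) l) by (apply nth_In; lia). apply Hm, zr_In_inv in H. lia. Qed.

Lemma ball_count k n Rad c :
  (sumN (fun l => if Z.leb (linf n c (vec_of l)) (Z.of_nat Rad) then 1 else 0)%nat (boxg k n)
   <= (2 * Rad + 1) ^ n)%nat.
Proof. unfold boxg. induction n; cbn [grid sumN linf].
  - destruct (Z.leb_spec 0 (Z.of_nat Rad)); simpl; lia.
  - unfold ext. rewrite sumN_flat_map.
    eapply Nat.le_trans with (sumN (fun l => (if Z.leb (linf n c (vec_of l)) (Z.of_nat Rad) then 1 else 0) * (2 * Rad + 1))%nat _).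
    + apply sumN_le. intros l Hl. rewrite sumN_map. apply grid_In in Hl. destruct Hl as [Hl _].
      assert (E : forall z, Z.max (Z.abs (c n - vec_of (l ++ z :: nil) n)) (linf n c (vec_of (l ++ z :: nil))) = Z.max (Z.abs (c n - z)) (linf n c (vec_of l))).
      { intros z. f_equal.
        - unfold vec_of. rewrite app_nth2 by lia. rewrite Hl, Nat.sub_diag. reflexivity.
        - apply linf_ext; auto. intros i Hi. unfold vec_of. rewrite app_nth1 by lia. auto. }
      destruct (Z.leb_spec (linf n c (vec_of l)) (Z.of_nat Rad)).
      * rewrite Nat.mul_1_l.
        eapply Nat.le_trans with (sumN (fun z => if Z.leb (Z.abs (c n - z)) (Z.of_nat Rad) then 1 else 0)%nat _).
        { apply sumN_le. intros z _. rewrite E.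
          destruct (Z.leb_spec (Z.max (Z.abs (c n - z)) (linf n c (vec_of l))) (Z.of_nat Rad));
          destruct (Z.leb_spec (Z.abs (c n - z)) (Z.of_nat Rad)); lia. }
        pose proof (zr_count (c n) (Z.of_nat Rad) (- Z.of_nat k) (2 * k + 1) ltac:(lia)). lia.
      * eapply Nat.le_trans. apply sumN_const_le with (c := 0%nat).
        intros z _. rewrite E. destruct (Z.leb_spec (Z.max (Z.abs (c n - z)) (linf n c (vec_of l))) (Z.of_nat Rad)); lia.
        lia.
    + rewrite sumN_mul_r, Nat.pow_succ_r'. nia.
Qed.

Lemma history_In n k A y t : valid_alg n k A -> in_box n k y -> In (history n A y t) (histg k t).
Proof. intros HA Hy. induction t; simpl. left; auto.
  apply grid_In_cons; auto. apply zr_In.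
  pose proof (linf_ge0 n (query A (history n A y t)) y).
  pose proof (linf_bound n k (query A (history n A y t)) y (proj1 (HA _)) Hy). lia. Qed.

Definition ind n Rad (o : vec) (l : list Z) : nat :=
  if Z.leb (linf n o (vec_of l)) (Z.of_nat Rad) then 1%nat else 0%nat.

Lemma cnt_bound n k s Rad A : valid_alg n k A ->
  (sumN (fun l => ind n Rad (run n s A (vec_of l)) l) (boxg k n) <= (2 * k + 1) ^ s * (2 * Rad + 1) ^ n)%nat.
Proof. intros HA.
  eapply Nat.le_trans with (sumN (fun l => sumN (fun h => ind n Rad (output A h) l) (histg k s)) (boxg k n)).
  { apply sumN_le. intros l Hl. unfold run.
    apply (sumN_In (fun h => ind n Rad (output A h) l)). apply history_In; auto. apply boxg_box; auto. }
  rewrite sumN_swap. eapply Nat.le_trans. apply sumN_const_le with (c := ((2 * Rad + 1) ^ n)%nat).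
  intros h _. apply ball_count.
  unfold histg. rewrite grid_length, zr_length. lia. Qed.

Lemma success_prob_eq n s Rad P l : success_prob n s Rad P (vec_of l) =
  sumR (fun p => fst p * INR (ind n Rad (run n s (snd p) (vec_of l)) l)) P.
Proof. induction P as [|p P IH]; simpl; auto. rewrite <- IH. unfold ind.
  destruct (Z.leb _ _); simpl; ring. Qed.

Lemma sum_fst (P : RandAlg) : fold_right (fun p acc => fst p + acc) 0 P = sumR (fun p => fst p) P.
Proof. induction P; simpl; auto. rewrite IHP; auto. Qed.

Lemma main_ineq n k s Rad P : good_alg n k s Rad P ->
  (2/3) * INR ((2 * k + 1) ^ n) <= INR ((2 * k + 1) ^ s * (2 * Rad + 1) ^ n).
Proof. intros [[Hpos Hsum] [Hval Hsucc]]. rewrite sum_fst in Hsum.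
  set (B := INR ((2 * k + 1) ^ s * (2 * Rad + 1) ^ n)).
  set (S := sumR (fun l => success_prob n s Rad P (vec_of l)) (boxg k n)).
  assert (H1 : (2/3) * INR (length (boxg k n)) <= S).
  { rewrite <- sumR_const. unfold S. apply sumR_le. intros l Hl. apply Rge_le, Hsucc, boxg_box; auto. }
  unfold boxg in H1. rewrite grid_length, zr_length in H1.
  assert (H2 : S <= B).
  { unfold S. rewrite (sumR_ext _ _ _ (fun l _ => success_prob_eq n s Rad P l)).
    rewrite sumR_swap.
    apply Rle_trans with (sumR (fun p => fst p * B) P).
    - apply sumR_le. intros p Hp. rewrite sumR_scal, sumR_INR.
      rewrite Forall_forall in Hpos, Hval. apply Rmult_le_compat_l. apply Hpos; auto.
      apply le_INR. apply cnt_bound. apply Hval; auto.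
    - rewrite (sumR_ext _ (fun p => B * fst p)) by (intros; ring). rewrite sumR_scal. change (sumR fst P) with (sumR (fun p : R * DetAlg => fst p) P). rewrite Hsum. lra. }
  lra. Qed.

Lemma ln_le x y : 0 < x -> x <= y -> ln x <= ln y.
Proof. intros Hx [H|H]. left; apply ln_increasing; auto. subst; lra. Qed.

Lemma analytic n k s Rad : (1 <= k)%nat -> (2 <= k)%nat -> (1 <= Rad)%nat -> (Rad <= k)%nat -> (1 <= s)%nat ->
  (2/3) * INR ((2 * k + 1) ^ n) <= INR ((2 * k + 1) ^ s * (2 * Rad + 1) ^ n) ->
  INR n * ln (INR k / INR Rad) <= 8 * INR s * ln (INR k).
Proof. intros _ Hk HR HRk Hs H.
  rewrite mult_INR, !pow_INR, !plus_INR, !mult_INR in H. simpl (INR 1) in H. simpl (INR 2) in H.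
  apply le_INR in Hk, HR, HRk, Hs. simpl (INR 1) in *. simpl (INR 2) in Hk.
  set (K := INR k) in *. set (Q := INR Rad) in *. set (N := INR n). set (S := INR s) in *.
  assert (Hq : 0 < 2 * Q + 1) by lra. assert (Hkk : 0 < 2 * K + 1) by lra.
  apply ln_le in H; [| apply Rmult_lt_0_compat; [lra| apply pow_lt; lra]].
  rewrite ln_mult, ln_mult, !ln_pow in H by (try apply pow_lt; lra).
  replace (1+1) with 2 in H by lra. change (INR s) with S in H. change (INR n) with N in H.
  set (a := ln (2 * K + 1)) in *. set (b := ln (2 * Q + 1)) in *.
  assert (Hlk : ln (K / Q) = ln K - ln Q).
  { unfold Rdiv. rewrite ln_mult, ln_Rinv by (try apply Rinv_0_lt_compat; lra). ring. }
  rewrite Hlk.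
  assert (H3 : ln K + 2 * b <= ln Q + 2 * a).
  { assert (0 <= (K - Q) * (4 * K * Q - 1)) by (apply Rmult_le_pos; nra).
    assert (E : K * ((2 * Q + 1) * (2 * Q + 1)) <= Q * ((2 * K + 1) * (2 * K + 1))) by nra.
    apply ln_le in E; [| apply Rmult_lt_0_compat; nra].
    rewrite !ln_mult in E by nra. unfold a, b. lra. }
  assert (H23 : ln (2/3) = - ln (3/2)).
  { replace (2/3) with (/ (3/2)) by field. rewrite ln_Rinv; lra. }
  assert (H32 : 0 <= ln (3/2)).
  { rewrite <- ln_1. apply ln_le; lra. }
  assert (H4 : a + ln (3/2) <= 4 * ln K).
  { unfold a.
    assert (K * K >= 4) by nra. assert (K * K * K >= 8) by nra.
    assert (E : (2 * K + 1) * (3/2) <= K * K * K * K) by nra.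
    assert (0 < K * K) by nra. assert (0 < K * K * K) by nra.
    apply ln_le in E; [|lra]. rewrite !ln_mult in E by lra. lra. }
  assert (Hn : 0 <= N) by apply pos_INR.
  assert (HlK : 0 < ln K) by (rewrite <- ln_1; apply ln_increasing; lra).
  assert (H5 : N * (a - b) <= S * a + ln (3/2)) by lra.
  assert (H6 : N * (ln K - ln Q) <= 2 * (N * (a - b))).
  { assert (ln K - ln Q <= 2 * (a - b)) by lra. nra. }
  assert (H7 : S * a + ln (3/2) <= S * (a + ln (3/2))) by nra.
  assert (H8 : S * (a + ln (3/2)) <= S * (4 * ln K)) by (apply Rmult_le_compat_l; lra).
  lra. Qed.

Lemma corner n k Rad P : (1 <= n)%nat -> good_alg n k 0 Rad P -> (k <= Rad)%nat.
Proof. intros Hn [[Hpos Hsum] [Hval Hsucc]]. rewrite sum_fst in Hsum.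
  set (y1 := fun _ : nat => Z.of_nat k). set (y2 := fun _ : nat => (- Z.of_nat k)%Z).
  assert (B1 : in_box n k y1) by (intros i Hi; unfold y1; lia).
  assert (B2 : in_box n k y2) by (intros i Hi; unfold y2; lia).
  pose proof (Hsucc _ B1) as S1. pose proof (Hsucc _ B2) as S2.
  destruct (classic (exists p, In p P /\ (linf n (run n 0 (snd p) y1) y1 <= Z.of_nat Rad)%Z
                                       /\ (linf n (run n 0 (snd p) y2) y2 <= Z.of_nat Rad)%Z)) as [Hex|Hno].
  - destruct Hex as [p [_ [H1 H2]]]. unfold run in *; simpl in *.
    pose proof (linf_coord n (output (snd p) nil) y1 0 ltac:(lia)).
    pose proof (linf_coord n (output (snd p) nil) y2 0 ltac:(lia)). unfold y1, y2 in *. lia.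
  - exfalso. unfold success_prob in S1, S2.
    assert (E : forall y, fold_right (fun p acc => (if Z.leb (linf n (run n 0 (snd p) y) y) (Z.of_nat Rad) then fst p else 0) + acc) 0 P
       = sumR (fun p => if Z.leb (linf n (run n 0 (snd p) y) y) (Z.of_nat Rad) then fst p else 0) P).
    { intros y. clear. induction P; simpl; auto. rewrite IHP; auto. }
    rewrite E in S1, S2.
    assert (sumR (fun p => (if Z.leb (linf n (run n 0 (snd p) y1) y1) (Z.of_nat Rad) then fst p else 0)
       + (if Z.leb (linf n (run n 0 (snd p) y2) y2) (Z.of_nat Rad) then fst p else 0)) P <= sumR (fun p => fst p) P).
    { apply sumR_le. intros p Hp. rewrite Forall_forall in Hpos. specialize (Hpos p Hp).
      destruct (Z.leb_spec (linf n (run n 0 (snd p) y1) y1) (Z.of_nat Rad));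
      destruct (Z.leb_spec (linf n (run n 0 (snd p) y2) y2) (Z.of_nat Rad)); try lra.
      exfalso; apply Hno; exists p; auto. }
    rewrite sumR_plus in H. rewrite Hsum in H.
    lra. Qed.

Lemma part1 : forall (n k Rad s : nat) (P : RandAlg),
      (1 <= n)%nat -> (2 <= k)%nat -> (1 <= Rad)%nat -> (Rad <= k)%nat ->
      good_alg n k s Rad P ->
      INR s >= 1/8 * (INR n * ln (INR k / INR Rad) / ln (INR k)).
Proof. intros n k Rad s P Hn Hk HR HRk Hg.
  assert (HK : 2 <= INR k) by (apply le_INR in Hk; simpl in Hk; lra).
  assert (HlK : 0 < ln (INR k)) by (rewrite <- ln_1; apply ln_increasing; lra).
  destruct s as [|s'].
  - pose proof (corner n k Rad P Hn Hg). assert (Rad = k) by lia. subst.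
    replace (INR k / INR k) with 1 by (field; lra). rewrite ln_1. simpl. unfold Rdiv. lra.
  - pose proof (analytic n k (S s') Rad ltac:(lia) Hk HR HRk ltac:(lia) (main_ineq _ _ _ _ _ Hg)).
    set (X := INR n * ln (INR k / INR Rad)) in *.
    assert (X / ln (INR k) <= 8 * INR (S s')).
    { unfold Rdiv. apply Rmult_le_reg_r with (ln (INR k)); auto.
      rewrite Rmult_assoc, Rinv_l by lra. lra. }
    lra. Qed.

Theorem theorem8 :
  (exists c : R, 0 < c /\
    forall (n k Rad s : nat) (P : RandAlg),
      (1 <= n)%nat -> (2 <= k)%nat -> (1 <= Rad)%nat -> (Rad <= k)%nat ->
      good_alg n k s Rad P ->
      INR s >= c * (INR n * ln (INR k / INR Rad) / ln (INR k)))
  /\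
  (forall eps : R, 0 < eps ->
    exists c : R, 0 < c /\
    forall (n k Rad s : nat) (P : RandAlg),
      (1 <= n)%nat -> (2 <= k)%nat -> (1 <= Rad)%nat -> (Rad <= k)%nat ->
      INR Rad <= Rpower (INR k) (1 - eps) ->
      good_alg n k s Rad P ->
      INR s >= c * INR n).
Proof.
  split.
  - exists (1/8). split. lra. exact part1.
  - intros eps He. exists (eps / 8). split. lra.
    intros n k Rad s P Hn Hk HR HRk Hpow Hg.
    pose proof (part1 n k Rad s P Hn Hk HR HRk Hg).
    assert (HK : 2 <= INR k) by (apply le_INR in Hk; simpl in Hk; lra).
    assert (HQ : 1 <= INR Rad) by (apply le_INR in HR; simpl in HR; lra).
    assert (HlK : 0 < ln (INR k)) by (rewrite <- ln_1; apply ln_increasing; lra).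
    assert (Hlk : ln (INR k / INR Rad) = ln (INR k) - ln (INR Rad)).
    { unfold Rdiv. rewrite ln_mult, ln_Rinv by (try apply Rinv_0_lt_compat; lra). ring. }
    assert (HlQ : ln (INR Rad) <= (1 - eps) * ln (INR k)).
    { rewrite <- ln_Rpower. apply ln_le; lra. }
    assert (Hn0 : 0 <= INR n) by apply pos_INR.
    assert (INR n * eps <= INR n * ln (INR k / INR Rad) / ln (INR k)).
    { rewrite Hlk. unfold Rdiv. apply Rmult_le_reg_r with (ln (INR k)); auto.
      match goal with |- _ <= ?A * / ?L * ?L => replace (A * / L * L) with A by (field; lra) end.
      assert (0 <= INR n * (ln (INR k) - ln (INR Rad) - eps * ln (INR k))) by (apply Rmult_le_pos; lra). nra. }
    lra. Qed.
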